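(* For every bipartite graph $G$, $\mathbf{tw}(G)\le 6\,\mathbf{mimw}(G')$, where $G'$ is defined below.
   Context: For $G=(V,E)$, $G'$ has vertices $x_v,y_v$ for each $v\in V$ and $p_{e,u},q_{e,u},p_{e,v},q_{e,v}$ for each edge $e=uv\in E$; its edges are $x_vy_u$ for all $u,v\in V$, and for each $e=uv\in E$ the edges $p_{e,u}q_{e,u}$, $p_{e,v}q_{e,v}$, $x_up_{e,u}$, $y_vq_{e,u}$, $x_vp_{e,v}$, $y_uq_{e,v}$. $\mathbf{tw}$ is treewidth. A branch decomposition $(T,\delta)$ of a graph $H$ is a tree with maximum degree $3$ and a bijection from its leaves to $V(H)$; each node of $T$ (rooted) yields a cut $(A,\bar A)$ with $A$ the labels of leaves below it. $\mathbf{mimw}(H)$ is the minimum over branch decompositions of the maximum over their cuts of the size of a maximum induced matching in $H[A,\bar A]$ (vertex set $V(H)$, edges of $H$ between $A$ and $\bar A$). *)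

(* Defs.v *)
From HB Require Import structures.
From mathcomp Require Import all_boot.
Set Implicit Arguments. Unset Strict Implicit. Unset Printing Implicit Defensive.

Definition simple_graph (T : finType) (e : rel T) : Prop :=
  symmetric e /\ irreflexive e.

Definition bipartite (T : finType) (e : rel T) : Prop :=
  exists c : T -> bool, forall x y, e x y -> c x != c y.

Definition is_tree (I : finType) (t : rel I) : Prop :=
  [/\ symmetric t, irreflexive t, 0 < #|I|,
      (forall a b, connect t a b) &
      (forall a b, t a b ->
         ~~ connect [rel x y | t x y && ((x, y) != (a, b)) && ((x, y) != (b, a))] a b)].

Definition tdeg (I : finType) (t : rel I) (i : I) : nat := #|[set j | t i j]|.
Definition is_leaf (I : finType) (t : rel I) (i : I) : bool := tdeg t i <= 1.

Definition tw_le (T : finType) (e : rel T) (k : nat) : Prop :=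
  exists (I : finType) (t : rel I) (bag : I -> {set T}),
    [/\ is_tree t,
        (forall v, exists i, v \in bag i),
        (forall u v, e u v -> exists i, (u \in bag i) && (v \in bag i)),
        (forall v i j, v \in bag i -> v \in bag j ->
           connect [rel a b | t a b && (v \in bag a) && (v \in bag b)] i j) &
        (forall i, #|bag i| <= k.+1)].

(* In the tree t rooted at r, node j lies below node i (j is in the subtree
   of i) iff i = r or every path from r to j passes through i. *)
Definition below (I : finType) (t : rel I) (r i j : I) : bool :=
  (i == r) || ~~ connect [rel a b | t a b && (a != i) && (b != i)] r j.

(* (t, lab) is a branch decomposition of a graph on V: t is a tree of maximum
   degree 3 and lab is a bijection from V onto the leaves of t
   (lab is the inverse of the paper's delta). *)
Definition is_branch_decomposition (V I : finType) (t : rel I) (lab : V -> I) : Prop :=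
  [/\ is_tree t,
      (forall i, tdeg t i <= 3),
      injective lab,
      (forall v, is_leaf t (lab v)) &
      (forall i, is_leaf t i -> exists v, lab v = i)].

Definition cut_side (V I : finType) (t : rel I) (r : I) (lab : V -> I) (i : I)
  : {set V} := [set v | below t r i (lab v)].

Definition induced_matching (V : finType) (h : rel V) (A : {set V})
  (M : {set V * V}) : Prop :=
  (forall p, p \in M -> [&& p.1 \in A, p.2 \notin A & h p.1 p.2]) /\
  (forall p q, p \in M -> q \in M -> p != q ->
     [&& p.1 != q.1, p.2 != q.2, ~~ h p.1 q.2 & ~~ h q.1 p.2]).

Definition mimw_le (V : finType) (h : rel V) (k : nat) : Prop :=
  exists (I : finType) (t : rel I) (r : I) (lab : V -> I),
    is_branch_decomposition t lab /\
    (forall i (M : {set V * V}),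
        induced_matching h (cut_side t r lab i) M -> #|M| <= k).

(* darts: ordered pairs (u, v) with uv an edge; the dart (u,v) indexes the
   pair p_{e,u}, q_{e,u} for e = uv. *)
Definition dart (T : finType) (e : rel T) := {d : T * T | e d.1 d.2}.

(* vertices: inl (inl v) = x_v, inl (inr v) = y_v,
             inr (inl d) = p_{e,u}, inr (inr d) = q_{e,u}  for d = (u,v). *)
Definition gp_vertex (T : finType) (e : rel T) : finType :=
  ((T + T) + (dart e + dart e))%type.

Definition gp_base (T : finType) (e : rel T) (a b : gp_vertex e) : bool :=
  match a, b with
  | inl (inl _), inl (inr _) => true                       (* x_v y_u *)
  | inr (inl d), inr (inr d') => d == d'                   (* p_{e,u} q_{e,u} *)
  | inl (inl u), inr (inl d) => u == (val d).1             (* x_u p_{e,u} *)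
  | inl (inr v), inr (inr d) => v == (val d).2             (* y_v q_{e,u} *)
  | _, _ => false
  end.

Definition gp_adj (T : finType) (e : rel T) : rel (gp_vertex e) :=
  fun a b => gp_base a b || gp_base b a.

(* Main.v *)
Require Import Defs.
From HB Require Import structures.
From mathcomp Require Import all_boot zify.
Set Implicit Arguments. Unset Strict Implicit. Unset Printing Implicit Defensive.

Section Gen.
Variable I : finType.
Implicit Types (e : rel I) (i a b n : I).

Definition avr e i : rel I := [rel x y | e x y && (x != i) && (y != i)].

Lemma conn_mono e e' a b : subrel e e' -> connect e a b -> connect e' a b.
Proof. move=> H; apply: connect_sub => x y /H; exact: connect1. Qed.

Lemma avr_sym e i : symmetric e -> symmetric (avr e i).
Proof. by move=> s x y; rewrite /avr /= (s x y); case: (e y x); case: (x != i); case: (y != i). Qed.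

Lemma T0 e i a : connect (avr e i) a i -> a = i.
Proof.
move/connectP=> [p]; elim: p a => [|x p IH] a /=; first by move=> _ ->.
by case/andP=> /andP[/andP[_ _] xi] /IH H /H ex; rewrite ex eqxx in xi.
Qed.

Lemma T0' e i a : symmetric e -> connect (avr e i) i a -> a = i.
Proof. by move=> s; rewrite (sym_connect_sym (avr_sym i s)); apply: T0. Qed.


End Gen.

Lemma T3g (I : finType) (e : rel I) i a b : connect e a b -> ~~ connect (avr e i) a b -> a != i ->
  exists2 n, e n i & connect (avr e i) a n.
Proof.
move/connectP=> [p]; elim: p a => [|x p IH] a /=.
  by move=> _ ->; rewrite connect0.
case/andP=> eax px lb nc ai.
case: (eqVneq x i) => [xi|xi]; first by exists a; [rewrite -xi|rewrite connect0].
have [n ni cn] : exists2 n, e n i & connect (avr e i) x n.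
  apply: IH => //; apply: contra nc => cx; apply: connect_trans cx.
  by apply: connect1; rewrite /avr /= eax ai xi.
by exists n => //; apply: connect_trans cn; apply: connect1; rewrite /avr /= eax ai xi.
Qed.

Section Tree.
Variables (I : finType) (t : rel I).
Hypothesis tr : is_tree t.

Lemma tsym : symmetric t. Proof. by case: tr. Qed.
Lemma tirr : irreflexive t. Proof. by case: tr. Qed.
Lemma tconn a b : connect t a b. Proof. by case: tr. Qed.

Lemma avsym i : connect_sym (avr t i).
Proof. exact/sym_connect_sym/avr_sym/tsym. Qed.

Lemma T1 n i a : t n i -> connect (avr t i) a n -> connect (avr t n) a i -> False.
Proof.
case: tr => _ _ _ _ br tni c1 c2.
have := br n i tni; apply/negP/negPn.
set e' := [rel _ _ | _].
have s1 : subrel (avr t i) e'.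
  move=> x y /andP[/andP[txy xi] yi]; rewrite /e' /= txy /=.
  by apply/andP; split; [apply: contra yi => /eqP [_ ->] | apply: contra xi => /eqP [-> _]].
have s2 : subrel (avr t n) e'.
  move=> x y /andP[/andP[txy xn] yn]; rewrite /e' /= txy /=.
  by apply/andP; split; [apply: contra xn => /eqP [-> _] | apply: contra yn => /eqP [_ ->]].
apply: (@connect_trans _ _ a); last exact: conn_mono s2 c2.
by apply: conn_mono s1 _; rewrite avsym.
Qed.

Lemma T3 a i : a != i -> exists2 n, t n i & connect (avr t i) a n.
Proof.
move=> ai; have nc : ~~ connect (avr t i) a i.
  by apply/negP => /T0 ei; rewrite ei eqxx in ai.
exact: T3g (tconn a i) nc ai.
Qed.

Definition onpath j a b := (j == a) || ~~ connect (avr t j) a b.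

Lemma onpath_end j a : onpath j a j.
Proof. rewrite /onpath; case: eqP => //= ne; by apply/negP => /T0 aj; apply: ne; rewrite aj. Qed.

Lemma onpath_start j b : onpath j j b.
Proof. by rewrite /onpath eqxx. Qed.

Lemma T2 a b i : onpath i a b ->
  connect [rel x y | t x y && onpath x a b && onpath y a b] a i.
Proof.
set R := [rel _ _ | _].
move: {2}#|[set x | connect (avr t i) a x]| (leqnn #|[set x | connect (avr t i) a x]|) => m.
elim: m i => [|m IH] i.
  rewrite leqn0 => /eqP /cards0_eq /setP /(_ a); rewrite !inE connect0 //.
move=> Hm oi; case: (eqVneq i a) => [->|ia]; first exact: connect0.
have sep : ~~ connect (avr t i) a b by move: oi; rewrite /onpath (negbTE ia).
have ai : a != i by rewrite eq_sym.
have [n tni cn] := T3 ai.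
have key : forall x, connect (avr t n) a x -> connect (avr t i) a x.
  move=> x cx; apply/negPn/negP => ncx.
  have sub : subrel (avr (avr t n) i) (avr t i).
    by move=> y z /andP[/andP[/andP[/andP[tyz _] _] yi] zi]; rewrite /avr /= tyz yi zi.
  have [n' n'i cn'] := T3g cx (contra (conn_mono sub) ncx) ai.
  apply: (T1 tni cn); apply: connect_trans (conn_mono _ cn') (connect1 n'i).
  by move=> y z /andP[/andP[]].
have on : onpath n a b.
  rewrite /onpath; case: (eqVneq n a) => //= na; apply/negP => cab.
  have sub : subrel (avr (avr t n) i) (avr t i).
    by move=> y z /andP[/andP[/andP[/andP[tyz _] _] yi] zi]; rewrite /avr /= tyz yi zi.
  have [n' n'i cn'] := T3g cab (contra (conn_mono sub) sep) ai.
  apply: (T1 tni cn); apply: connect_trans (conn_mono _ cn') (connect1 n'i).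
  by move=> y z /andP[/andP[]].
have Rni : R n i by rewrite /R /= tni on oi.
suff H : connect R a n by apply: (connect_trans H); apply: connect1.
case: (eqVneq n a) => [->|na]; first exact: connect0.
apply: IH on; rewrite -ltnS; apply: leq_trans Hm; apply: proper_card.
apply/properP; split.
  by apply/subsetP => x; rewrite !inE; apply: key.
exists n; rewrite !inE //; apply/negP => /T0 an; by rewrite an eqxx in na.
Qed.

Lemma leafconn i a b : is_leaf t i -> a != i -> b != i -> connect (avr t i) a b.
Proof.
move=> li ai bi; have [n tni cn] := T3 ai; have [n' tn'i cn'] := T3 bi.
have e : n = n'.
  move: li; rewrite /is_leaf /tdeg => /card_le1_eqP H.
  by apply: H; rewrite inE tsym.
apply: connect_trans cn _; rewrite e avsym; exact: cn'.
Qed.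

Lemma classify r j l s : l != j -> s != j -> ~~ connect (avr t j) l s ->
  (j != r /\ connect (avr t j) r s /\ ~~ connect (avr t j) r l)
  \/ exists c, [/\ t j c, (j == r) || ~~ connect (avr t j) r c,
                  ~~ connect (avr t c) r s, c != r & connect (avr t c) r l].
Proof.
move=> lj sj sep.
case: (boolP ((j != r) && connect (avr t j) r s)) => [/andP[jr crs]|].
  left; split=> //; split=> //; apply/negP => crl; move/negP: sep; apply.
  by apply: connect_trans crs; rewrite avsym.
rewrite negb_and negbK => H; right.
have [c tcj csc] := T3 sj.
have cj : c != j by apply/negP => /eqP ec; rewrite ec tirr in tcj.
have sub : subrel (avr (avr t j) c) (avr t c).
  by move=> y z /andP[/andP[/andP[/andP[tyz _] _] yi] zi]; rewrite /avr /= tyz yi zi.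
have sub2 : subrel (avr (avr t j) c) (avr t j) by move=> y z /andP[/andP[]].
have Gx : forall x, (x == j) || ~~ connect (avr t j) x s -> connect (avr t c) x j.
  move=> x; case: (eqVneq x j) => [->|xj] /= hx; first exact: connect0.
  have [n tnj cxn] := T3 xj.
  have nxc : ~~ connect (avr t j) x c.
    apply/negP => cxc; move/negP: hx; apply; apply: connect_trans cxc _.
    by rewrite avsym.
  have nc : n != c by apply/negP => /eqP ec; rewrite -ec cxn in nxc.
  have xc : x != c by apply/negP => /eqP ec; rewrite ec connect0 in nxc.
  have cxn' : connect (avr t c) x n.
    apply/negPn/negP => ncx.
    have [n' n'c cn'] := T3g cxn (contra (conn_mono sub) ncx) xc.
    move/negP: nxc; apply; apply: connect_trans (conn_mono sub2 cn') (connect1 n'c).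
  apply: connect_trans cxn' (connect1 _); rewrite /avr /= tnj nc.
  by rewrite eq_sym.
have cl := Gx l (introT orP (or_intror sep)).
have cr : connect (avr t c) r j.
  by apply: Gx; case/orP: H => [/eqP ->|->]; rewrite ?eqxx ?orbT.
exists c; split.
- by rewrite tsym.
- case/orP: H => [->//|nrs]; apply/orP; right; apply/negP => crc.
  by move/negP: nrs; apply; apply: connect_trans crc _; rewrite avsym.
- apply/negP => crs; apply: (T1 tcj csc).
  by apply: connect_trans cr; rewrite avsym.
- apply/negP => /eqP ec; move: cr; rewrite ec => /(T0' (tsym)) ejr.
  by rewrite ec ejr tirr in tcj.
- by apply: connect_trans cr _; rewrite avsym.
Qed.

Lemma childcount r j : (j != r) + #|[set c | t j c && ((j == r) || ~~ connect (avr t j) r c)]| <= tdeg t j.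
Proof.
rewrite /tdeg; case: (eqVneq j r) => [->|jr] /=.
  by apply: subset_leq_card; apply/subsetP => x; rewrite !inE => /andP[].
have rj : r != j by rewrite eq_sym.
have [p tpj crp] := T3 rj.
rewrite (cardsD1 p [set j0 | t j j0]) inE tsym tpj /= add1n ltnS.
apply: subset_leq_card; apply/subsetP => x; rewrite !inE.
case/andP=> -> ncx; rewrite andbT; apply/negP => /eqP ex.
by rewrite ex crp in ncx.
Qed.

End Tree.

Lemma im_build (V W : finType) (h : rel V) (A : {set V}) (b : bool) (S : {set W})
   (nend fend : W -> V) (own : V -> W) :
  symmetric h ->
  (forall w, w \in S -> [/\ own (nend w) = w, own (fend w) = w,
       nend w \in (if b then A else ~: A), fend w \notin (if b then A else ~: A)
       & h (nend w) (fend w)]) ->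
  (forall w w', w \in S -> w' \in S -> h (nend w) (fend w') -> w = w') ->
  let M := [set (if b then (nend w, fend w) else (fend w, nend w)) | w in S] in
  induced_matching h A M /\ #|M| = #|S|.
Proof.
move=> hs H1 H2 M; split; last first.
  apply: card_in_imset => w w' ws ws' /=.
  have [o1 o2 _ _ _] := H1 _ ws; have [o1' o2' _ _ _] := H1 _ ws'.
  by destruct b => -[e1 e2]; [rewrite -o1 -o1' e1 | rewrite -o2 -o2' e1].
split.
  move=> p /imsetP [w ws ->]; have [_ _ nA fA hnf] := H1 _ ws.
  destruct b => /=; rewrite ?inE ?negbK in nA fA; first by rewrite nA fA hnf.
  by rewrite fA nA hs hnf.
move=> p q /imsetP [w ws ->] /imsetP [w' ws' ->] pq.
have ww : w != w' by apply: contra pq => /eqP ->.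
have [o1 o2 _ _ _] := H1 _ ws; have [o1' o2' _ _ _] := H1 _ ws'.
have d1 : nend w != nend w' by apply: contra ww => /eqP e; rewrite -o1 -o1' e.
have d2 : fend w != fend w' by apply: contra ww => /eqP e; rewrite -o2 -o2' e.
have h1 : ~~ h (nend w) (fend w') by apply: contra ww => /(H2 _ _ ws ws') ->.
have h2 : ~~ h (nend w') (fend w) by apply: contra ww => /(H2 _ _ ws' ws) ->.
by destruct b => /=; rewrite ?d1 ?d2 ?h1 ?h2 // hs h2 hs h1.
Qed.

Section Gp.
Variables (T : finType) (e : rel T) (c : T -> bool).
Local Notation V := (gp_vertex e).
Local Notation h := (@gp_adj T e).

Definition xv (u : T) : V := inl (inl u).
Definition yv (u : T) : V := inl (inr u).
Definition pv (d : dart e) : V := inr (inl d).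
Definition qv (d : dart e) : V := inr (inr d).
Definition rho (w : T) : V := if c w then yv w else xv w.
Definition inSg (w : T) (z : V) : bool :=
  match z with
  | inr (inl d) => ~~ c w && ((val d).1 == w)
  | inr (inr d) => if c w then (val d).2 == w else (val d).1 == w
  | _ => false end.

Definition Wset (A : {set V}) (b : bool) : {set T} :=
  let N := if b then A else ~: A in
  [set w | (rho w \in N) && [exists z, inSg w z && (z \notin N)]].

Definition WL (N : {set V}) := [set w | ~~ c w && (xv w \in N) &&
   [exists d : dart e, ((val d).1 == w) && ((pv d \notin N) || (qv d \notin N))]].
Definition WR (N : {set V}) := [set w | c w && (yv w \in N) &&
   [exists d : dart e, ((val d).2 == w) && (qv d \notin N)]].

Lemma hsym : symmetric h.
Proof. by move=> a b; rewrite /gp_adj orbC. Qed.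

Lemma Wsub A b : Wset A b \subset WL (if b then A else ~: A) :|: WR (if b then A else ~: A).
Proof.
set N := if b then A else ~: A.
apply/subsetP => w; rewrite !inE /rho => /andP[rw /existsP[z /andP[iz zN]]].
case cw : (c w) rw iz => rw iz /=.
  apply/andP; split => //; apply/existsP.
  by case: z iz zN => [[]//|[]] d /=; rewrite cw //= => dw zN; exists d; rewrite dw.
rewrite orbF; apply/andP; split => //; apply/existsP.
by case: z iz zN => [[]//|[]] d /=; rewrite cw //= => dw zN; exists d; rewrite dw //= ?zN ?orbT.
Qed.

Definition own1 (z : V) : T :=
  match z with inl (inl u) => u | inl (inr u) => u
  | inr (inl d) => (val d).1 | inr (inr d) => (val d).1 end.
Definition own2 (z : V) : T :=
  match z with inl (inl u) => u | inl (inr u) => u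
  | inr (inl d) => (val d).2 | inr (inr d) => (val d).2 end.

Lemma WLbound A b k : (forall M, induced_matching h A M -> #|M| <= k) ->
  #|WL (if b then A else ~: A)| <= k.
Proof.
set N := if b then A else ~: A => Hk.
pose P w := [pred d : dart e | ((val d).1 == w) && ((pv d \notin N) || (qv d \notin N))].
pose nend w := if [pick d in P w] is Some d then (if pv d \notin N then xv w else pv d) else xv w.
pose fend w := if [pick d in P w] is Some d then (if pv d \notin N then pv d else qv d) else xv w.
have H1 : forall w, w \in WL N -> [/\ own1 (nend w) = w, own1 (fend w) = w,
       nend w \in N, fend w \notin N & h (nend w) (fend w)].
  move=> w; rewrite inE => /andP[/andP[cw xN] /existsP[d0 Pd0]].
  rewrite /nend /fend; case: pickP => [d /andP[/eqP dw Pd]|/(_ d0)]; last by rewrite inE Pd0.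
  case: ifP => pN /=; first by rewrite dw xN pN /gp_adj /= dw eqxx.
  move: Pd; rewrite pN /= => qN; split => //; [exact: negbFE | by rewrite /gp_adj /= eqxx].
have shape : forall w, w \in WL N -> (exists u, nend w = xv u) \/ (exists d, nend w = pv d).
  move=> w _; rewrite /nend; case: pickP => [d _|_]; last by left; exists w.
  by case: ifP => _; [left; exists w | right; exists d].
have shapef : forall w, w \in WL N -> exists d, fend w = pv d \/ fend w = qv d.
  move=> w; rewrite inE => /andP[_ /existsP[d0 Pd0]].
  rewrite /fend; case: pickP => [d _|/(_ d0)]; last by rewrite inE Pd0.
  by exists d; case: ifP => _; [left|right].
have H2 : forall w w', w \in WL N -> w' \in WL N -> h (nend w) (fend w') -> w = w'.
  move=> w w' ws ws'; have [o1 _ _ _ _] := H1 _ ws; have [_ o2 _ _ _] := H1 _ ws'.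
  move=> hh; rewrite -o1 -o2; move: hh.
  have [d' [->|->]] := shapef _ ws'; case: (shape _ ws) => [[u ->]|[d ->]];
    rewrite /gp_adj /= ?orbF //=.
  - by move/eqP.
  - by move/eqP ->.
have [im cM] := im_build hsym H1 H2.
by rewrite -cM; apply: Hk im.
Qed.

Lemma WRbound A b k : (forall M, induced_matching h A M -> #|M| <= k) ->
  #|WR (if b then A else ~: A)| <= k.
Proof.
set N := if b then A else ~: A => Hk.
pose P w := [pred d : dart e | ((val d).2 == w) && (qv d \notin N)].
pose nend w := yv w.
pose fend w := if [pick d in P w] is Some d then qv d else yv w.
have H1 : forall w, w \in WR N -> [/\ own2 (nend w) = w, own2 (fend w) = w,
       nend w \in N, fend w \notin N & h (nend w) (fend w)].
  move=> w; rewrite inE => /andP[/andP[cw yN] /existsP[d0 Pd0]].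
  rewrite /nend /fend; case: pickP => [d /andP[/eqP dw Pd]|/(_ d0)]; last by rewrite inE Pd0.
  by rewrite /= dw yN Pd /gp_adj /= dw eqxx.
have H2 : forall w w', w \in WR N -> w' \in WR N -> h (nend w) (fend w') -> w = w'.
  move=> w w' ws ws'; have [_ o2 _ _ _] := H1 _ ws'.
  have [d ed] : exists d, fend w' = qv d.
    move: ws'; rewrite inE => /andP[_ /existsP[d0 Pd0]].
    rewrite /fend; case: pickP => [d _|/(_ d0)]; last by rewrite inE Pd0.
    by exists d.
  move=> hh; rewrite -o2; move: hh; rewrite ed /nend /gp_adj /= orbF.
  by move/eqP.
have [im cM] := im_build hsym H1 H2.
by rewrite -cM; apply: Hk im.
Qed.

Lemma Wbound A b k : (forall M, induced_matching h A M -> #|M| <= k) ->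
  #|Wset A b| <= k + k.
Proof.
move=> Hk; apply: leq_trans (subset_leq_card (Wsub A b)) _.
apply: leq_trans (leq_card_setU _ _).1 _.
by apply: leq_add; [apply: WLbound | apply: WRbound].
Qed.

End Gp.

Lemma inS_card (T : finType) (e : rel T) (c : T -> bool) (z0 : gp_vertex e) :
  #|[set w | (z0 == rho e c w) || inSg c w z0]| <= 2.
Proof.
apply: leq_trans (_ : #|[set own1 z0; own2 z0]| <= 2); last by rewrite cards2; case: (_ != _).
apply: subset_leq_card; apply/subsetP => w; rewrite !inE /rho.
case: z0 => [[u|u]|[d|d]] /=; case: (c w) => //=; rewrite ?orbF.
all: try (by move/eqP => [->]; rewrite eqxx).
all: by rewrite eq_sym => ->; rewrite ?orbT.
Qed.


Lemma kpos (T : finType) (e : rel T) (I : finType) (t : rel I) r (lab : gp_vertex e -> I) k (v : T) :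
  is_branch_decomposition t lab ->
  (forall i (M : {set gp_vertex e * gp_vertex e}),
        induced_matching (@gp_adj T e) (cut_side t r lab i) M -> #|M| <= k) -> 0 < k.
Proof.
move=> [tr _ linj lleaf _] Hk.
have gen : forall zi zo, @gp_adj T e zi zo -> lab zi != r -> zi != zo -> 0 < k.
  move=> zi zo hz zr zz.
  have zA : zi \in cut_side t r lab (lab zi).
    rewrite inE /below (negbTE zr) /=; apply/negP => /T0 rz.
    by rewrite rz eqxx in zr.
  have zoA : zo \notin cut_side t r lab (lab zi).
    rewrite inE /below (negbTE zr) /= negbK.
    apply: (leafconn tr (lleaf zi)); first by rewrite eq_sym.
    by apply: contra zz => /eqP /linj ->.
  have := Hk (lab zi) [set (zi, zo)]; rewrite cards1; apply; split.
    by move=> p; rewrite inE => /eqP -> /=; rewrite zA zoA hz.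
  by move=> p q; rewrite !inE => /eqP -> /eqP ->; rewrite eqxx.
case: (eqVneq (lab (xv e v)) r) => [e1|ne].
  apply: (gen (yv e v) (xv e v)) => //.
    apply/negP => /eqP e2; rewrite -e2 in e1; by have := linj _ _ e1.
apply: (gen (xv e v) (yv e v)) => //.
Qed.

Lemma card_bigcup_leq (I W : finType) (C : {set I}) (F : I -> {set W}) m :
  (forall i, i \in C -> #|F i| <= m) -> #|\bigcup_(i in C) F i| <= #|C| * m.
Proof.
move=> H; rewrite -sum_nat_const.
apply: leq_trans (_ : _ <= \sum_(i in C) #|F i|) _; last exact: leq_sum.
apply: (big_ind2 (fun (A : {set W}) n => #|A| <= n)) => //.
  by rewrite cards0.
move=> A1 n1 A2 n2 h1 h2; apply: leq_trans (leq_card_setU _ _).1 _.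
exact: leq_add.
Qed.

Unset Implicit Arguments.

Theorem lemma12 (T : finType) (e : rel T) (k : nat) :
  simple_graph e -> bipartite e ->
  mimw_le (@gp_adj T e) k -> tw_le e (6 * k).
Proof.
move=> [esym eirr] [c hc] [I [t [r [lab [bd Hk]]]]].
have [tr deg3 linj lleaf lsurj] := bd.
pose inS w z := (z == rho e c w) || inSg c w z.
pose bag j := [set w | [exists z, inS w z && onpath t j (lab (rho e c w)) (lab z)]].
exists I, t, bag; split => //.
- move=> v; exists (lab (rho e c v)); rewrite inE; apply/existsP; exists (rho e c v).
  by rewrite /inS eqxx onpath_start.
- move=> u v; wlog cu : u v / c u = false.
    move=> H euv; case cu: (c u); last exact: H.
    have cv : c v = false by have := hc u v euv; rewrite cu; case: (c v).
    have evu : e v u by rewrite esym.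
    by have [i hi] := H v u cv evu; exists i; rewrite andbC.
  move=> euv; have cv : c v = true by have := hc u v euv; rewrite cu; case: (c v).
  pose d : dart e := exist _ (u, v) euv.
  exists (lab (qv d)); rewrite !inE; apply/andP; split; apply/existsP; exists (qv d);
    by rewrite onpath_end /inS /= ?cu ?cv eqxx orbT.
- move=> v i j; rewrite !inE => /existsP[z1 /andP[iz1 o1]] /existsP[z2 /andP[iz2 o2]].
  set R := [rel a b | _].
  have key : forall z x, inS v z -> onpath t x (lab (rho e c v)) (lab z) ->
      connect R (lab (rho e c v)) x.
    move=> z x iz ox; apply: conn_mono (T2 tr ox) => a b /andP[/andP[tab oa] ob].
    rewrite /R /= tab !inE; apply/andP; split; apply/existsP; exists z; by rewrite iz.
  have Rsym : symmetric R.
    move=> a b; rewrite /R /= (tsym tr a b).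
    by case: (t b a); case: (v \in bag a); case: (v \in bag b).
  apply: connect_trans (key _ _ iz2 o2).
  by rewrite (sym_connect_sym Rsym); apply: key iz1 o1.
- move=> j.
  case: (eqVneq #|T| 0) => [T0 | Tn].
    by apply: leq_trans (max_card _) _; rewrite T0.
  have kp : 0 < k.
    have : 0 < #|T| by rewrite lt0n.
    by case/card_gt0P => v _; apply: (kpos v bd Hk).
  set X := [set w | [exists z, inS w z && (lab z == j)]].
  set P := if j != r then Wset c (cut_side t r lab j) true else set0.
  set Ch := [set c0 | t j c0 && ((j == r) || ~~ connect (avr t j) r c0)].
  set U := \bigcup_(c0 in Ch) Wset c (cut_side t r lab c0) false.
  have sub : bag j \subset X :|: P :|: U.
    apply/subsetP => w; rewrite inE => /existsP[z /andP[iz oz]].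
    set l := lab (rho e c w) in oz.
    case: (eqVneq l j) => [lj | lj].
      rewrite !in_setU; apply/orP; left; apply/orP; left.
      by rewrite inE; apply/existsP; exists (rho e c w); rewrite /inS eqxx /=; apply/eqP; exact: lj.
    case: (eqVneq (lab z) j) => [sj|sj].
      rewrite !in_setU; apply/orP; left; apply/orP; left.
      by rewrite inE; apply/existsP; exists z; rewrite iz sj eqxx.
    have sep : ~~ connect (avr t j) l (lab z).
      by move: oz; rewrite /onpath eq_sym (negbTE lj).
    have zr : z != rho e c w.
      by apply/negP => /eqP ez; move: sep; rewrite ez connect0.
    have izg : inSg c w z by move: iz; rewrite /inS (negbTE zr).
    case: (classify tr r lj sj sep) => [[jr [crs ncl]] | [c0 [tjc ch ncs cr crl]]].
      rewrite !in_setU; apply/orP; left; apply/orP; right.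
      rewrite /P jr /Wset inE; apply/andP; split.
        by rewrite inE /below (negbTE jr) /=.
      by apply/existsP; exists z; rewrite izg inE /below (negbTE jr) /= negbK.
    rewrite !in_setU; apply/orP; right; apply/bigcupP; exists c0.
      by rewrite inE tjc ch.
    rewrite /Wset inE; apply/andP; split.
      by rewrite !inE /below (negbTE cr) /= negbK.
    by apply/existsP; exists z; rewrite izg !inE /below ncs orbT.
  have cX : (#|X| <= 2 /\ tdeg t j <= 1) \/ #|X| = 0.
    case: (pickP [pred z | lab z == j]) => [z0 /eqP lz0 | none].
      left; split; last by rewrite -lz0; apply: lleaf.
      apply: leq_trans (inS_card c z0); apply: subset_leq_card; apply/subsetP => w.
      rewrite !inE => /existsP[z /andP[iz /eqP lz]].
      by move: iz; rewrite /inS; have -> : z = z0 by apply: linj; rewrite lz lz0.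
    right; apply/eqP; rewrite cards_eq0; apply/eqP/setP => w; rewrite !inE.
    by apply/negbTE/negP => /existsP[z /andP[_ lz]]; have := none z; rewrite /= lz.
  have cP : #|P| <= (j != r) * (k + k).
    rewrite /P; case: (j != r); last by rewrite cards0.
    by rewrite mul1n; apply: Wbound; apply: Hk.
  have cU : #|U| <= #|Ch| * (k + k).
    by apply: card_bigcup_leq => c0 _; apply: Wbound; apply: Hk.
  have cc := childcount tr r j.
  have d3 := deg3 j.
  have cPU : #|P| + #|U| <= tdeg t j * (k + k).
    apply: leq_trans (leq_add cP cU) _; rewrite -mulnDl; exact: leq_mul.
  have cb : #|bag j| <= #|X| + (#|P| + #|U|).
    apply: leq_trans (subset_leq_card sub) _; rewrite addnA.
    apply: leq_trans (leq_card_setU _ _).1 _; apply: leq_add => //.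
    exact: (leq_card_setU _ _).1.
  case: cX => [[x2 d1] | x0].
    have : tdeg t j * (k + k) <= k + k by rewrite -[X in _ <= X]mul1n leq_mul2r d1 orbT.
    move: cb x2 cPU kp; clear; lia.
  have : tdeg t j * (k + k) <= 3 * (k + k) by rewrite leq_mul2r d3 orbT.
  move: cb x0 cPU kp; clear; lia.
Qed.
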